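(* Let $A_0=(a_1|a_2)\in\mathbb{Z}[i]^{4\times2}$ be a $2$-icube of norm $\lambda$ with $a_1$ primitive. Then $d_2(A_0)$ divides $\lambda$ in $\mathbb{Z}[i]$.
   Context: A $2$-icube of norm $\lambda>0$ is $(a_1|a_2)$ with $a_1^*a_1=a_2^*a_2=\lambda$, $a_1^*a_2=0$. A vector is primitive if its entries have no common non-unit divisor. $d_2(A_0)$ is the gcd of the $2\times2$ minors of $A_0$. *)

(* Defs.v *)
From HB Require Import structures.
From mathcomp Require Import all_boot all_order all_algebra all_field.
Set Implicit Arguments. Unset Strict Implicit. Unset Printing Implicit Defensive.
Import Order.TTheory GRing.Theory Num.Theory.
Local Open Scope ring_scope.

(* Gaussian integers Z[i] realised inside the algebraic complex numbers algC. *)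
Definition gaussian (z : algC) : bool :=
  ('Re z \is a Num.int) && ('Im z \is a Num.int).

Definition gdvd (d x : algC) : Prop := exists2 q, gaussian q & x = q * d.

Definition gunit (d : algC) : Prop := exists2 e, gaussian e & d * e = 1.

Definition gprimitive n (v : 'cV[algC]_n) : Prop :=
  forall d, gaussian d -> (forall k, gdvd d (v k 0)) -> gunit d.

Definition minor2 (A : 'M[algC]_(4,2)) (i j : 'I_4) : algC :=
  A i 0 * A j 1 - A i 1 * A j 0.

(* g is a gcd (in Z[i]) of the 2x2 minors of A; d_2(A) is any such g *)
Definition is_d2 (A : 'M[algC]_(4,2)) (g : algC) : Prop :=
  [/\ gaussian g,
      (forall i j : 'I_4, (i < j)%N -> gdvd g (minor2 A i j)) &
      (forall d, gaussian d ->
         (forall i j : 'I_4, (i < j)%N -> gdvd d (minor2 A i j)) -> gdvd d g)].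

Definition icube2 (A : 'M[algC]_(4,2)) (lambda : algC) : Prop :=
  [/\ forall i j, gaussian (A i j),
      0 < lambda,
      \sum_k (A k 0)^* * A k 0 = lambda,
      \sum_k (A k 1)^* * A k 1 = lambda &
      \sum_k (A k 0)^* * A k 1 = 0].

(* Main.v *)
Require Import Defs.
From mathcomp Require Import all_boot all_order all_algebra all_field zify ring lra.
From Stdlib Require Import Classical.
Import Order.TTheory GRing.Theory Num.Theory.
Local Open Scope ring_scope.
Lemma round (p N : int) : 0 < N -> exists q : int, - N <= 2 * (p - q * N) <= N.
Proof.
move=> N0; exists ((2 * p + N) %/ (2 * N))%Z.
have := divz_eq (2 * p + N) (2 * N).
have := ltz_pmod (2 * p+N) (_ : 0 < 2 * N).
have := modz_ge0 (2 * p+N) (_ : 2 * N != 0).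
set q := ((2 * p + N) %/ (2 * N))%Z; set m := ((2 * p + N) %% (2 * N))%Z.
move=> h1 h2 h3.
have H1 : 0 <= m by apply: h1; lia.
have H2 : m < 2 * N by apply: h2; lia.
lia.
Qed.
Lemma euclid_int (a b c d : int) : a^+2+b^+2 != 0 -> exists q1 q2 : int,
  (c - (q1*a - q2*b))^+2 + (d - (q1*b + q2*a))^+2 < a^+2+b^+2.
Proof.
move=> hN.
set N := a^+2+b^+2.
have N0 : 0 < N by rewrite lt_def hN /N addr_ge0 ?sqr_ge0.
have [q1 /andP[h1 h1']] := @round (c*a + d*b) N N0.
have [q2 /andP[h2 h2']] := @round (d*a - c*b) N N0.
exists q1, q2.
set u := c*a + d*b - q1 * N. set w := d*a - c*b - q2 * N.
have id : ((c - (q1*a - q2*b))^+2 + (d - (q1*b + q2*a))^+2) * N = u^+2 + w^+2.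
  rewrite /u /w /N; ring.
have hu : 4 * u^+2 <= N^+2.
  have e : N^+2 - 4*u^+2 = (N - 2*u)*(N + 2*u) by ring.
  rewrite -subr_ge0 e; apply: mulr_ge0; rewrite /u; lia.
have hw : 4 * w^+2 <= N^+2.
  have e : N^+2 - 4*w^+2 = (N - 2*w)*(N + 2*w) by ring.
  rewrite -subr_ge0 e; apply: mulr_ge0; rewrite /w; lia.
set R := (c - (q1*a - q2*b))^+2 + (d - (q1*b + q2*a))^+2 in id *.
have h4 : 4 * (R * N) <= 2 * (N * N) by rewrite id -expr2; lia.
rewrite ltNge; apply/negP => hR.
have : N * N <= R * N by rewrite ler_wpM2r // ltW.
have : 0 < N * N by rewrite mulr_gt0.
lia.
Qed.

Definition gr (a b : int) : algC := a%:~R + 'i * b%:~R.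

Lemma gaussP z : gaussian z <-> exists a b : int, z = gr a b.
Proof.
split.
  case/andP => /intrP[a ha] /intrP[b hb]; exists a, b.
  by rewrite /gr -ha -hb -algCrect.
case=> a [b ->]; rewrite /gaussian /gr Re_rect ?Im_rect ?realz ?intr_int //.
Qed.

Lemma gr_gauss a b : gaussian (gr a b).
Proof. by apply/gaussP; exists a, b. Qed.

Lemma grM a b c d : gr a b * gr c d = gr (a*c - b*d) (a*d + b*c).
Proof.
apply/eqP; rewrite -subr_eq0 /gr.
have -> : (a%:~R + 'i * b%:~R) * (c%:~R + 'i * d%:~R) -
  ((a * c - b * d)%:~R + 'i * (a * d + b * c)%:~R) = (b*d)%:~R * ('i^+2 + 1) :> algC.
  rewrite !intrM !intrD !intrN !intrM; ring.
by rewrite sqrCi addNr mulr0.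
Qed.

Lemma grD a b c d : gr a b + gr c d = gr (a+c) (b+d).
Proof. rewrite /gr !intrD; ring. Qed.

Lemma grN a b : - gr a b = gr (-a) (-b).
Proof. rewrite /gr !intrN; ring. Qed.

Lemma grC a b : (gr a b)^* = gr a (-b).
Proof. by rewrite /gr conjC_rect ?realz // intrN mulrN. Qed.

Lemma gaussianM x y : gaussian x -> gaussian y -> gaussian (x * y).
Proof. by move=> /gaussP[a [b ->]] /gaussP[c [d ->]]; rewrite grM gr_gauss. Qed.
Lemma gaussianD x y : gaussian x -> gaussian y -> gaussian (x + y).
Proof. by move=> /gaussP[a [b ->]] /gaussP[c [d ->]]; rewrite grD gr_gauss. Qed.
Lemma gaussianN x : gaussian x -> gaussian (- x).
Proof. by move=> /gaussP[a [b ->]]; rewrite grN gr_gauss. Qed.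
Lemma gaussianC x : gaussian x -> gaussian (x^*).
Proof. by move=> /gaussP[a [b ->]]; rewrite grC gr_gauss. Qed.
Lemma gaussian0 : gaussian 0.
Proof. have -> : (0:algC) = gr 0 0 by rewrite /gr mulr0 addr0. exact: gr_gauss. Qed.
Lemma gaussianB x y : gaussian x -> gaussian y -> gaussian (x - y).
Proof. by move=> hx hy; apply: gaussianD => //; apply: gaussianN. Qed.

Lemma gdvd0 g : gdvd g 0.
Proof. by exists 0; rewrite ?mul0r //; apply: gaussian0. Qed.
Lemma gdvdD g x y : gdvd g x -> gdvd g y -> gdvd g (x + y).
Proof. by case=> p hp -> [q hq ->]; exists (p + q); rewrite ?mulrDl // gaussianD. Qed.
Lemma gdvdN g x : gdvd g x -> gdvd g (- x).
Proof. by case=> p hp ->; exists (- p); rewrite ?mulNr // gaussianN. Qed.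
Lemma gdvdMl g c x : gaussian c -> gdvd g x -> gdvd g (c * x).
Proof. by move=> hc [p hp ->]; exists (c * p); rewrite ?mulrA // gaussianM. Qed.

Lemma gr_eq0 a b : gr a b = 0 -> a = 0 /\ b = 0.
Proof.
move=> h.
have hr : 'Re (gr a b) = 0 by rewrite h; apply/Creal_ReP; exact: real0.
have hi : 'Im (gr a b) = 0 by rewrite h; apply/Creal_ImP; exact: real0.
rewrite /gr Re_rect ?Im_rect ?realz // in hr hi.
by move/eqP: hr; move/eqP: hi; rewrite !intr_eq0 => /eqP -> /eqP ->.
Qed.

Section Descent.
Variable I : algC -> Prop.
Hypothesis hI : forall x y q, I x -> I y -> gaussian q -> I (x - q * y).
Variable v : 'I_4 -> algC.
Hypothesis hv : forall j, gaussian (v j).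
Hypothesis hvI : forall j, I (v j).

Lemma descent (n : nat) : forall a b : int, a^+2 + b^+2 < n%:Z ->
  gr a b != 0 -> I (gr a b) ->
  exists y, [/\ gaussian y, y != 0, I y & forall j, gdvd y (v j)].
Proof.
elim: n => [|n IH] a b hn hx hIx.
  have := sqr_ge0 a; have := sqr_ge0 b; lia.
case: (classic (exists j, ~ gdvd (gr a b) (v j))) => [[j hj]|hall]; last first.
  exists (gr a b); split => // [|j]; first exact: gr_gauss.
  by apply: NNPP => hj; apply: hall; exists j.
have /gaussP [c [d hcd]] := hv j.
have hN : a^+2 + b^+2 != 0.
  apply/negP => /eqP h0; move/negP: hx; apply; apply/eqP.
  have ha : a = 0 by have := sqr_ge0 a; have := sqr_ge0 b; nia.
  have hb : b = 0 by have := sqr_ge0 a; have := sqr_ge0 b; nia.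
  by rewrite ha hb /gr mulr0 addr0.
have [q1 [q2 hq]] := @euclid_int a b c d hN.
have hr : v j - gr q1 q2 * gr a b =
   gr (c - (q1*a - q2*b)) (d - (q1*b + q2*a)).
  by rewrite hcd grM grN grD; congr gr; ring.
apply: (IH (c - (q1*a - q2*b)) (d - (q1*b + q2*a))).
- lia.
- apply/eqP => h0; apply: hj; exists (gr q1 q2); first exact: gr_gauss.
  by apply/eqP; rewrite -subr_eq0 hr h0.
- by rewrite -hr; apply: hI => //; exact: gr_gauss.
Qed.
End Descent.

Lemma sum_minor (c x y : 'I_4 -> algC) p q :
  \sum_i c i * (x i * p - y i * q) = (\sum_i c i * x i) * p - (\sum_i c i * y i) * q.
Proof. by rewrite !mulr_suml -sumrB; apply: eq_bigr => i _; ring. Qed.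

Theorem mainTheorem19 (A : 'M[algC]_(4,2)) (lambda : algC) :
  icube2 A lambda -> gprimitive (col 0 A) ->
  forall g, is_d2 A g -> gdvd g lambda.
Proof.
case=> hG hpos h0 h1 h01 hprim g [gg hmin _].
have hm : forall i j, gdvd g (minor2 A i j).
  move=> i j; case: (ltngtP i j) => hij; first exact: hmin.
    have -> : minor2 A i j = - minor2 A j i by rewrite /minor2; ring.
    exact/gdvdN/hmin.
  have -> : i = j by apply: val_inj.
  have -> : minor2 A j j = 0 by rewrite /minor2; ring.
  exact: gdvd0.
have h10 : \sum_k (A k 1)^* * A k 0 = 0.
  have -> : \sum_k (A k 1)^* * A k 0 = (\sum_k (A k 0)^* * A k 1)^*.
    by rewrite rmorph_sum; apply: eq_bigr => k _; rewrite rmorphM /= conjCK mulrC.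
  by rewrite h01 rmorph0.
have key : forall j, gdvd g (lambda * A j 0).
  move=> j.
  have -> : lambda * A j 0 = - \sum_i (A i 1)^* * minor2 A i j.
    rewrite /minor2 sum_minor h10 h1; ring.
  apply: gdvdN; apply: (big_ind (gdvd g)); [exact: gdvd0| exact: gdvdD|].
  by move=> i _; apply: gdvdMl; [apply: gaussianC|].
pose I x := gdvd g (lambda * x).
have hI : forall x y q, I x -> I y -> gaussian q -> I (x - q * y).
  move=> x y q hx hy hq; rewrite /I mulrBr.
  have -> : lambda * (q * y) = q * (lambda * y) by ring.
  by apply: gdvdD => //; apply: gdvdN; apply: gdvdMl.
case: (boolP [exists k, A k 0 != 0]) => [/existsP [k hk]|]; last first.
  rewrite negb_exists => /forallP hall.
  move: hpos; rewrite -h0 big1 ?ltxx // => k _.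
  by move: (hall k); rewrite negbK => /eqP ->; rewrite mulr0.
have /gaussP [a [b hab]] := hG k 0.
have [y [gy y0 Iy hy]] := @descent I hI (fun j => A j 0) (fun j => hG j 0) key
   (absz (a^+2 + b^+2)).+1 a b (ltac:(lia)) (ltac:(by rewrite -hab)) (ltac:(rewrite /I -hab; exact: key)).
have [e ge ye] : gunit y.
  apply: hprim => // j; rewrite mxE; exact: hy.
case: Iy => p gp hp.
exists (e * p); first exact: gaussianM.
by rewrite -[LHS]mulr1 -ye mulrA hp; ring.
Qed.
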